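(* For positive integers $a<b\le c$, the words in $\mathbb{P}^*$ that are Wilf equivalent to $bac$ are exactly $bac$ and $cab$.
   Context: $\mathbb{P}^*$ is the set of finite words over the positive integers (usual order). For $w=w_1\ldots w_n$, $\mathrm{wt}(w)=t^nx^{\sum_i w_i}$. For words $u,w$, $u\le w$ (generalized factor order) if there are $|u|$ consecutive letters of $w$ whose $i$-th letter is $\ge$ the $i$-th letter of $u$ for each $i$. $F(u;t,x)=\sum_{w\in\mathbb{P}^*,\,u\le w}\mathrm{wt}(w)$, and $u\backsim v$ (Wilf equivalence) iff $F(u;t,x)=F(v;t,x)$. *)

(* Defs.v *)
From mathcomp Require Import all_boot.
Set Implicit Arguments. Unset Strict Implicit. Unset Printing Implicit Defensive.

Definition pword (w : seq nat) : bool := all (fun i => 0 < i) w.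

Definition gfo (u w : seq nat) : bool :=
  [exists i : 'I_(size w).+1, (i + size u <= size w) &&
    [forall j : 'I_(size u), nth 0 u j <= nth 0 w (i + j)]].

(* Coefficient of t^n x^s in F(u;t,x): number of words w in P^* with
   |w| = n, sum of letters = s, and u <= w.  (Any such word has all letters
   <= s, so it is represented by an n-tuple over 'I_s.+1.) *)
Definition Fcoef (u : seq nat) (n s : nat) : nat :=
  #|[set w : n.-tuple 'I_s.+1 |
      [&& pword (map val w), sumn (map val w) == s &
          gfo u (map val w) ]]|.

Definition wilf_equiv (u v : seq nat) : Prop :=
  forall n s, Fcoef u n s = Fcoef v n s.

(* Main.v *)
Require Import Defs.
From mathcomp Require Import all_boot.
From Stdlib Require Import Lia.
Set Implicit Arguments. Unset Strict Implicit. Unset Printing Implicit Defensive.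

Ltac tolia := repeat match goal with
 | H : is_true (_ <= _) |- _ => move/leP: H => H
 | H : is_true (_ == _) |- _ => move/eqP: H => H
 | H : is_true (~~ (_ <= _)) |- _ => move/negP/leP: H => H
 | H : (_ <= _) = false |- _ => move/negbT/negP/leP: H => H
 end;
 try match goal with
 | |- is_true (_ <= _) => apply/leP
 | |- is_true (_ == _) => apply/eqP
 | |- is_true (~~ (_ <= _)) => apply/negP/leP
 end;
 unfold addn, subn, muln in *; lia.

Section Counting.
Variables n s : nat.
Local Notation T := (n.-tuple 'I_s.+1).

Definition ws (w : T) : seq nat := map val w.
Definition good (w : T) := pword (ws w) && (sumn (ws w) == s).
Definition dom (f : nat -> nat) (x : seq nat) :=
  all (fun m => f m <= nth 0 x m) (iota 0 (size x)).
Definition D (f : nat -> nat) := [set w : T | good w && dom f (ws w)].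
Definition Sm (f : nat -> nat) := \sum_(m <- iota 0 n) f m.

Lemma size_ws w : size (ws w) = n.
Proof. by rewrite /ws size_map size_tuple. Qed.

Lemma ws_inj : injective ws.
Proof. move=> w1 w2 /(inj_map val_inj) H; exact: val_inj. Qed.

Lemma sumn_Sm w : sumn (ws w) = Sm (nth 0 (ws w)).
Proof. by rewrite sumnE (big_nth 0) size_ws /index_iota subn0. Qed.

Lemma domP f w : reflect (forall m, m < n -> f m <= nth 0 (ws w) m) (dom f (ws w)).
Proof.
apply: (iffP allP) => H m.
  by move=> Hm; apply: H; rewrite mem_iota size_ws.
by rewrite mem_iota size_ws => /andP[_ Hm]; apply: H.
Qed.

Lemma Sm_le f g : (forall m, m < n -> f m <= g m) -> Sm f <= Sm g.
Proof.
move=> H; rewrite /Sm big_seq [X in _ <= X]big_seq; apply: leq_sum => m.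
by rewrite mem_iota => /andP[_ Hm]; apply: H.
Qed.

Lemma Sm_term f m : m < n -> f m <= Sm f.
Proof.
move=> Hm; rewrite /Sm (bigD1_seq m) ?iota_uniq ?mem_iota //=; exact: leq_addr.
Qed.

Lemma Sm_ext f g : (forall m, m < n -> f m = g m) -> Sm f = Sm g.
Proof.
move=> H; rewrite /Sm big_seq [RHS]big_seq; apply: eq_bigr => m.
by rewrite mem_iota => /andP[_ Hm]; apply: H.
Qed.

Lemma DI f g : D f :&: D g = D (fun m => maxn (f m) (g m)).
Proof.
apply/setP => w; rewrite !inE andbACA andbb; congr (_ && _).
by rewrite /dom -all_predI; apply: eq_all => m /=; rewrite geq_max.
Qed.

Lemma D_empty f : s < Sm f -> D f = set0.
Proof.
move=> Hs; apply/setP => w; rewrite !inE; apply/negP => /andP[/andP[_ /eqP Hsum] /domP Hd].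
have := Sm_le Hd; rewrite -sumn_Sm Hsum => H. tolia.
Qed.

Definition mk (f : nat -> nat) : T :=
  @Tuple n _ (map inord (mkseq f n)) (introT eqP (etrans (size_map _ _) (size_mkseq _ _))).

Lemma ws_mk f : (forall m, m < n -> f m <= s) -> ws (mk f) = mkseq f n.
Proof.
move=> H; rewrite /ws /= -map_comp -[RHS]map_id; apply/eq_in_map => x.
rewrite /mkseq => /mapP[m]; rewrite mem_iota => /andP[_ Hm] ->{x} /=.
by rewrite inordK // ltnS H.
Qed.

Lemma mk_in' h f : Sm h = s -> (forall m, m < n -> 0 < h m) ->
  (forall m, m < n -> f m <= h m) -> mk h \in D f.
Proof.
move=> Hs Hpos Hfh.
have Hle : forall m, m < n -> h m <= s by move=> m Hm; rewrite -Hs; exact: Sm_term.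
rewrite inE /good ws_mk // -andbA; apply/and3P; split.
- apply/allP => x /mapP[m]; rewrite mem_iota => /andP[_ Hm] ->; exact: Hpos.
- apply/eqP; rewrite sumnE (big_nth 0) size_mkseq /index_iota subn0 -Hs.
  by apply: Sm_ext => m Hm; rewrite nth_mkseq.
- apply/allP => m; rewrite mem_iota size_mkseq => /andP[_ Hm]; rewrite nth_mkseq //.
  exact: Hfh.
Qed.

Lemma mk_in f : Sm f = s -> (forall m, m < n -> 0 < f m) -> mk f \in D f.
Proof. by move=> Hs Hpos; apply: mk_in'. Qed.

Lemma D_trans f g : Sm f = Sm g -> (forall m, m < n -> 0 < g m) -> #|D f| <= #|D g|.
Proof.
move=> Hfg Hg.
pose v (w : T) m := nth 0 (ws w) m - f m + g m.
have Hv : forall w, w \in D f -> Sm (v w) = s /\ (forall m, m < n -> v w m <= s).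
  move=> w; rewrite inE => /andP[/andP[_ /eqP Hs] /domP Hd].
  have Hsum : Sm (v w) = s.
    have E1 : \sum_(m <- iota 0 n) (nth 0 (ws w) m - f m) = Sm (nth 0 (ws w)) - Sm f.
      rewrite big_seq sumnB; first by rewrite -!big_seq.
      by move=> m; rewrite mem_iota => /andP[_ Hm]; apply: Hd.
    have E2 := Sm_le Hd.
    rewrite /Sm /v big_split /= E1 -/(Sm g) -Hfg -sumn_Sm Hs.
    rewrite -sumn_Sm Hs in E2; tolia.
  split=> // m Hm; rewrite -Hsum; exact: Sm_term.
have -> : #|D f| = #|[set mk (v w) | w in D f]|.
  rewrite card_in_imset // => w1 w2 H1 H2 E.
  have := congr1 ws E; rewrite !ws_mk; try by case: (Hv _ H1); try by case: (Hv _ H2).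
  move=> E'; apply: ws_inj; apply: (@eq_from_nth _ 0); first by rewrite !size_ws.
  rewrite size_ws => m Hm.
  have := congr1 (nth 0 ^~ m) E'; rewrite /= !nth_mkseq // /v.
  move: H1 H2; rewrite !inE => /andP[_ /domP Hd1] /andP[_ /domP Hd2].
  move: (Hd1 m Hm) (Hd2 m Hm) => A B C; tolia.
apply: subset_leq_card; apply/subsetP => x /imsetP[w Hw ->].
case: (Hv _ Hw) => Hs Hle.
apply: mk_in' => // m Hm; rewrite /v.
- have := Hg m Hm => A; tolia.
- exact: leq_addl.
Qed.


Definition pad (u : seq nat) i m :=
  if (i <= m) && (m < i + size u) then nth 0 u (m - i) else 1.

Definition G u := [set w : T | good w && gfo u (ws w)].

Lemma FcoefG u : Fcoef u n s = #|G u|.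
Proof. by apply: eq_card => w; rewrite !inE /good /ws andbA. Qed.

End Counting.

Lemma gfoP u x : reflect (exists i, i + size u <= size x /\
   forall j, j < size u -> nth 0 u j <= nth 0 x (i + j)) (gfo u x).
Proof.
apply: (iffP existsP) => [[i /andP[Hi /forallP H]] | [i [Hi H]]].
  by exists i; split => // j Hj; exact: (H (Ordinal Hj)).
have Hi' : i < (size x).+1 by rewrite ltnS; apply: leq_trans Hi; exact: leq_addr.
exists (Ordinal Hi'); rewrite /= Hi /=; apply/forallP => j; exact: H.
Qed.

Lemma domPs f x : reflect (forall m, m < size x -> f m <= nth 0 x m) (dom f x).
Proof.
apply: (iffP allP) => H m.
  by move=> Hm; apply: H; rewrite mem_iota.
by rewrite mem_iota => /andP[_ Hm]; apply: H.
Qed.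

Lemma gfo_pad u x : pword x ->
  (gfo u x <-> exists i, i + size u <= size x /\ dom (pad u i) x).
Proof.
move=> Hp; split.
- move/gfoP => [i [Hi H]]; exists i; split => //; apply/domPs => m Hm.
  rewrite /pad; case: ifP => [/andP[h1 h2] | _].
    have := H (m - i) ltac:(tolia); rewrite subnKC //.
  exact: (all_nthP 0 Hp).
- move=> [i [Hi /domPs Hd]]; apply/gfoP; exists i; split => // j Hj.
  have := Hd (i + j) ltac:(tolia); rewrite /pad.
  have -> : (i <= i + j) && (i + j < i + size u) by apply/andP; split; tolia.
  by rewrite addKn.
Qed.

Lemma G_mem n s u w : w \in G n s u <->
  exists i, i + size u <= n /\ w \in D n s (pad u i).
Proof.
rewrite [_ \in G _ _ _]inE; case Hg: (good w) => /=.
  move: (Hg); rewrite /good => /andP[Hp _].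
  rewrite gfo_pad // size_ws; split => [[i [H1 H2]] | [i [H1 H2]]]; exists i;
   by move: H2; rewrite inE Hg.
by split => //; case=> i [_]; rewrite inE Hg.
Qed.

Lemma G3 s u : size u = 3 -> G 3 s u = D 3 s (pad u 0).
Proof.
move=> Hu; apply/setP => w; apply/idP/idP.
- move/G_mem => [i [Hi H]]; rewrite Hu in Hi.
  have E : i = 0 by tolia.
  by move: H; rewrite E.
- by move=> H; apply/G_mem; exists 0; rewrite Hu.
Qed.

Lemma G4 s u : size u = 3 -> G 4 s u = D 4 s (pad u 0) :|: D 4 s (pad u 1).
Proof.
move=> Hu; apply/setP => w; rewrite in_setU; apply/idP/idP.
- move/G_mem => [i [Hi H]]; rewrite Hu in Hi.
  case: i Hi H => [|[|i]] Hi H; rewrite ?H ?orbT //; tolia.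
- by case/orP => H; apply/G_mem; [exists 0 | exists 1]; rewrite Hu.
Qed.

Lemma G5 s u : size u = 3 ->
  G 5 s u = D 5 s (pad u 0) :|: D 5 s (pad u 1) :|: D 5 s (pad u 2).
Proof.
move=> Hu; apply/setP => w; rewrite !in_setU; apply/idP/idP.
- move/G_mem => [i [Hi H]]; rewrite Hu in Hi.
  case: i Hi H => [|[|[|i]]] Hi H; rewrite ?H ?orbT //; tolia.
- by case/orP => [/orP[]|] H; apply/G_mem; [exists 0 | exists 1 | exists 2]; rewrite Hu.
Qed.

Definition mx (f g : nat -> nat) m := maxn (f m) (g m).

Lemma mx_pos n f g : (forall m, m < n -> 0 < f m) -> (forall m, m < n -> 0 < mx f g m).
Proof. by move=> H m Hm; apply: leq_trans (H m Hm) (leq_maxl _ _). Qed.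

Lemma pad_pos u i : pword u -> forall m, 0 < pad u i m.
Proof.
move=> Hp m; rewrite /pad; case: ifP => // /andP[h1 h2].
apply: (all_nthP 0 Hp); tolia.
Qed.

Lemma D_pos n s f : Sm n f = s -> (forall m, m < n -> 0 < f m) -> 0 < #|D n s f|.
Proof. by move=> Hs Hp; apply/card_gt0P; exists (mk n s f); apply: mk_in. Qed.

Lemma D_zero n s f : s < Sm n f -> #|D n s f| = 0.
Proof. by move=> H; rewrite D_empty // cards0. Qed.

Lemma D_eq n s f g : Sm n f = Sm n g -> (forall m, m < n -> 0 < f m) ->
  (forall m, m < n -> 0 < g m) -> #|D n s f| = #|D n s g|.
Proof. by move=> E Hf Hg; apply/eqP; rewrite eqn_leq !D_trans. Qed.

Lemma D_card_Sm n f g : (forall m, m < n -> 0 < f m) -> (forall m, m < n -> 0 < g m) ->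
  (forall s, #|D n s f| = #|D n s g|) -> Sm n f = Sm n g.
Proof.
move=> Hf Hg H; case: (ltngtP (Sm n f) (Sm n g)) => // C.
- have := H (Sm n f); rewrite (D_zero (f := g)) // => E.
  by have := D_pos (erefl _) Hf; rewrite E.
- have := H (Sm n g); rewrite (D_zero (f := f)) // => E.
  by have := D_pos (erefl _) Hg; rewrite -E.
Qed.

Lemma D_card_Sm2 n f1 f2 g1 g2 :
  (forall m, m < n -> 0 < f1 m) -> (forall m, m < n -> 0 < g1 m) ->
  (forall m, m < n -> f1 m <= f2 m) -> (forall m, m < n -> g1 m <= g2 m) ->
  Sm n g1 < Sm n g2 ->
  (forall s, #|D n s f1| + #|D n s g2| = #|D n s g1| + #|D n s f2|) ->
  Sm n f1 = Sm n g1 \/ (Sm n f1 < Sm n g1 /\ Sm n f2 = Sm n f1).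
Proof.
move=> Hf Hg Hf12 Hg12 Hg2 H.
have Lf := Sm_le Hf12; have Lg := Sm_le Hg12.
case: (ltngtP (Sm n f1) (Sm n g1)) => C; [right|left|by left].
- split=> //; have := H (Sm n f1).
  rewrite (D_zero (f := g1)) // (D_zero (f := g2)); last by tolia.
  case: (ltngtP (Sm n f1) (Sm n f2)) => C2; last by [].
  + rewrite (D_zero (f := f2)) // => E.
    by have := D_pos (erefl _) Hf; rewrite addn0 in E; rewrite E.
  + tolia.
- exfalso; have := H (Sm n g1).
  rewrite (D_zero (f := f1)) // (D_zero (f := g2)) // (D_zero (f := f2)); last by tolia.
  rewrite !addn0 => E; have := D_pos (erefl _) Hg; rewrite -E => ?; tolia.
Qed.

Lemma step3 u v : size u = 3 -> size v = 3 -> pword u -> pword v -> wilf_equiv v u ->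
  Sm 3 (pad v 0) = Sm 3 (pad u 0).
Proof.
move=> Su Sv Pu Pv W; apply: D_card_Sm => [m _|m _|s]; try exact: pad_pos.
by have := W 3 s; rewrite !FcoefG !G3.
Qed.

Lemma step4 u v : size u = 3 -> size v = 3 -> pword u -> pword v -> wilf_equiv v u ->
  Sm 4 (pad v 0) = Sm 4 (pad u 0) -> Sm 4 (pad v 1) = Sm 4 (pad u 1) ->
  Sm 4 (mx (pad v 0) (pad v 1)) = Sm 4 (mx (pad u 0) (pad u 1)).
Proof.
move=> Su Sv Pu Pv W E0 E1.
have P : forall w i, pword w -> forall m, m < 4 -> 0 < pad w i m.
  by move=> w i Pw m _; exact: pad_pos.
apply: D_card_Sm => [||s]; try (apply: mx_pos; auto).
have := W 4 s; rewrite !FcoefG !G4 // => E.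
have := cardsUI (D 4 s (pad v 0)) (D 4 s (pad v 1)).
have := cardsUI (D 4 s (pad u 0)) (D 4 s (pad u 1)).
rewrite !DI E (D_eq s E0) ?(D_eq s E1); auto.
move=> A B; rewrite /mx; tolia.
Qed.

Lemma step5 u v : size u = 3 -> size v = 3 -> pword u -> pword v -> wilf_equiv v u ->
  (forall i, i < 3 -> Sm 5 (pad v i) = Sm 5 (pad u i)) ->
  Sm 5 (mx (pad v 0) (pad v 1)) = Sm 5 (mx (pad u 0) (pad u 1)) ->
  Sm 5 (mx (pad v 1) (pad v 2)) = Sm 5 (mx (pad u 1) (pad u 2)) ->
  Sm 5 (mx (pad u 0) (pad u 2)) <
    Sm 5 (mx (mx (pad u 0) (pad u 2)) (mx (pad u 1) (pad u 2))) ->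
  Sm 5 (mx (pad v 0) (pad v 2)) = Sm 5 (mx (pad u 0) (pad u 2)) \/
  (Sm 5 (mx (pad v 0) (pad v 2)) < Sm 5 (mx (pad u 0) (pad u 2)) /\
   Sm 5 (mx (mx (pad v 0) (pad v 2)) (mx (pad v 1) (pad v 2))) = Sm 5 (mx (pad v 0) (pad v 2))).
Proof.
move=> Su Sv Pu Pv W Ei E01 E12 Lu.
have P : forall w i, pword w -> forall m, m < 5 -> 0 < pad w i m.
  by move=> w i Pw m _; exact: pad_pos.
have Q : forall f g : nat -> nat, forall m, m < 5 -> f m <= mx f g m.
  by move=> f g m _; exact: leq_maxl.
apply: (@D_card_Sm2 5 _ _ _ (mx (mx (pad u 0) (pad u 2)) (mx (pad u 1) (pad u 2))))
  => //; try (apply: mx_pos; auto); try exact: Q.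
move=> s.
have key : forall w, size w = 3 ->
  #|G 5 s w| + #|D 5 s (mx (pad w 0) (pad w 1))| + #|D 5 s (mx (pad w 1) (pad w 2))|
   + #|D 5 s (mx (pad w 0) (pad w 2))|
  = #|D 5 s (pad w 0)| + #|D 5 s (pad w 1)| + #|D 5 s (pad w 2)|
   + #|D 5 s (mx (mx (pad w 0) (pad w 2)) (mx (pad w 1) (pad w 2)))|.
  move=> w Sw; rewrite G5 //.
  set A := D 5 s (pad w 0); set B := D 5 s (pad w 1); set C := D 5 s (pad w 2).
  have h1 := cardsUI A B; have h2 := cardsUI (A :|: B) C.
  have h3 := cardsUI (A :&: C) (B :&: C).
  rewrite setIUl in h2.
  rewrite /A /B /C !DI in h1 h2 h3 *.
  rewrite /mx; tolia.
have Kv := key v Sv; have Ku := key u Su.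
have := W 5 s; rewrite !FcoefG => E.
rewrite E (D_eq s (Ei 0 erefl)) ?(D_eq s (Ei 1 erefl)) ?(D_eq s (Ei 2 erefl))
  ?(D_eq s E01) ?(D_eq s E12) in Kv; try (apply: mx_pos; auto); auto.
tolia.
Qed.

Lemma gfo_rev u x : gfo u x -> gfo (rev u) (rev x).
Proof.
move/gfoP => [i [Hi H]]; apply/gfoP; exists (size x - size u - i); rewrite !size_rev.
split; first tolia.
move=> j Hj; rewrite !nth_rev ?size_rev; [|tolia|tolia].
have := H (size u - j.+1) ltac:(tolia).
have -> : i + (size u - j.+1) = size x - (size x - size u - i + j).+1 by tolia.
done.
Qed.

Lemma card_rev_le n s u : #|G n s u| <= #|G n s (rev u)|.
Proof.
pose r (w : n.-tuple 'I_s.+1) := [tuple of rev w].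
have -> : #|G n s u| = #|[set r w | w in G n s u]|.
  rewrite card_in_imset // => w1 w2 _ _ E.
  apply: val_inj; apply: (can_inj (@revK _)); exact: (congr1 val E).
apply: subset_leq_card; apply/subsetP => x /imsetP[w Hw ->].
move: Hw; rewrite !inE /good /ws /pword /= !map_rev all_rev sumn_rev => /andP[-> H] /=.
exact: gfo_rev.
Qed.

Lemma Fcoef_rev u n s : Fcoef (rev u) n s = Fcoef u n s.
Proof.
rewrite !FcoefG; apply/eqP; rewrite eqn_leq card_rev_le.
by have := card_rev_le n s (rev u); rewrite revK => ->.
Qed.

Lemma Sm_pad0 u : Sm (size u) (pad u 0) = sumn u.
Proof.
rewrite sumnE (big_nth 0) /index_iota subn0; apply: Sm_ext => m Hm.
by rewrite /pad Hm /= subn0.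
Qed.

Lemma Fpos u : pword u -> 0 < Fcoef u (size u) (sumn u).
Proof.
move=> Pu; rewrite FcoefG; apply/card_gt0P; exists (mk (size u) (sumn u) (pad u 0)).
apply/G_mem; exists 0; split => //; apply: mk_in; first exact: Sm_pad0.
by move=> m _; apply: pad_pos.
Qed.

Lemma Fzero u n s : n < size u -> Fcoef u n s = 0.
Proof.
move=> Hn; rewrite FcoefG; apply: eq_card0 => w; rewrite inE.
apply/negP => /andP[_ /gfoP[i [Hi _]]]; rewrite size_ws in Hi; tolia.
Qed.

Lemma Sm3 f : Sm 3 f = f 0 + f 1 + f 2.
Proof. by rewrite /Sm /= !big_cons big_nil addn0 !addnA. Qed.
Lemma Sm4 f : Sm 4 f = f 0 + f 1 + f 2 + f 3.
Proof. by rewrite /Sm /= !big_cons big_nil addn0 !addnA. Qed.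
Lemma Sm5 f : Sm 5 f = f 0 + f 1 + f 2 + f 3 + f 4.
Proof. by rewrite /Sm /= !big_cons big_nil addn0 !addnA. Qed.

Lemma maxn_r p q : p <= q -> maxn p q = q. Proof. by move/maxn_idPr. Qed.
Lemma maxn_l p q : q <= p -> maxn p q = p. Proof. by move/maxn_idPl. Qed.
Ltac simpmax := repeat match goal with
 | |- context [maxn ?p ?q] =>
   first [ rewrite (@maxn_r p q ltac:(tolia)) | rewrite (@maxn_l p q ltac:(tolia)) ]
 end.

Theorem corollary6 (a b c : nat) :
  0 < a -> a < b -> b <= c ->
  forall v : seq nat, pword v ->
    (wilf_equiv v [:: b; a; c] <-> (v = [:: b; a; c] \/ v = [:: c; a; b])).
Proof.
move=> Ha Hab Hbc v Pv; split; last first.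
  case=> -> n s //; exact: (Fcoef_rev [:: b; a; c] n s).
move=> W; set u := [:: b; a; c].
have Pu : pword u by rewrite /pword /=; apply/and4P; split=> //; tolia.
have Sv : size v = 3.
  case: (ltngtP (size v) 3) => // C.
  - have := W (size v) (sumn v); rewrite (@Fzero u (size v) (sumn v) C) => E.
    by have := Fpos Pv; rewrite E.
  - have := W 3 (sumn u); rewrite (@Fzero v 3 (sumn u) C) => E.
    by have := Fpos Pu; rewrite -E.
move: Pv W Sv; case: v => [|x [|y [|z [|]]]] //= Pv W _.
move: (Pv); rewrite /pword /= => /and4P[Hx Hy Hz _].
have E3 := step3 (u:=u) (v:=[::x;y;z]) erefl erefl Pu Pv W.
move: E3; rewrite !Sm3 /pad /= => E3.
have E4 := step4 (u:=u) (v:=[::x;y;z]) erefl erefl Pu Pv W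
  ltac:(rewrite !Sm4 /pad /=; tolia) ltac:(rewrite !Sm4 /pad /=; tolia).
move: E4; rewrite !Sm4 /mx /pad /= => E4.
have E5 := step5 (u:=u) (v:=[::x;y;z]) erefl erefl Pu Pv W.
move: E5; rewrite !Sm5 /mx /pad /= => E5.
have {}E5 := E5 ltac:(move=> [|[|[|i]]] // _; rewrite !Sm5 /=; tolia).
move: E4 E5; simpmax => E4 E5.
have {}E5 := E5 ltac:(tolia) ltac:(tolia) ltac:(tolia).
suff : (x = b /\ y = a /\ z = c) \/ (x = c /\ y = a /\ z = b).
  by case=> [[-> [-> ->]] | [-> [-> ->]]]; [left | right].
move: E3 E4 E5.
case: (leqP x y) => ?; case: (leqP y z) => ?; case: (leqP x z) => ?; simpmax => E3 E4 [E5|[E5 E6]]; tolia.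
Qed.
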